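(* Let $G$ be a finite group and $N\unlhd G$ a normal subgroup. If $G$ is almost monomial, then the quotient group $G/N$ is almost monomial.
   Context: A finite group $G$ is called almost monomial if for every two distinct complex irreducible characters $\chi$ and $\psi$ of $G$ there exist a subgroup $H\le G$ and a linear (degree one) character $\varphi$ of $H$ such that the induced character $\operatorname{Ind}_H^G\varphi$ contains $\chi$ (i.e. $\langle \operatorname{Ind}_H^G\varphi,\chi\rangle\neq 0$) and does not contain $\psi$ (i.e. $\langle \operatorname{Ind}_H^G\varphi,\psi\rangle=0$), where $\langle\,,\rangle$ is the usual inner product of class functions. *)

(* Defs.v *)
From HB Require Import structures.
From mathcomp Require Import all_boot all_order all_algebra all_fingroup all_solvable all_field all_character.
Set Implicit Arguments. Unset Strict Implicit. Unset Printing Implicit Defensive.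
Import GRing.Theory Num.Theory.
Local Open Scope ring_scope.
Local Open Scope group_scope.

Definition almost_monomial (gT : finGroupType) (G : {group gT}) : Prop :=
  forall i j : Iirr G, i != j ->
    exists H : {group gT}, H \subset G /\
      exists phi : 'CF(H), phi \is a linear_char /\
        '['Ind[G] phi, 'chi_i] != 0 /\ '['Ind[G] phi, 'chi_j] = 0.

(* Main.v *)
Require Import Defs.
From mathcomp Require Import all_boot all_order all_algebra all_fingroup all_solvable all_field all_character.
Set Implicit Arguments. Unset Strict Implicit. Unset Printing Implicit Defensive.
Import GRing.Theory Num.Theory.
Local Open Scope ring_scope.
Local Open Scope group_scope.

Theorem theorem2p2 (gT : finGroupType) (G N : {group gT}) :
  N <| G -> almost_monomial G -> almost_monomial (G / N)%G.
Proof.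
move=> nsNG AM i j nij.
have [sNG nNG] := andP nsNG.
have nij' : mod_Iirr i != mod_Iirr j :> Iirr G.
  apply: contra nij => /eqP e; apply/eqP/irr_inj.
  by rewrite -(cfModK nsNG 'chi_i) -(cfModK nsNG 'chi_j) -!mod_IirrE // e.
have [H [sHG [phi [lphi [Hi Hj]]]]] := AM _ _ nij'.
rewrite !mod_IirrE // in Hi Hj.
have nNH : H \subset 'N(N) := subset_trans sHG nNG.
have kerphi : N :&: H \subset cfker phi.
  have [k Dk] := irrP (lin_char_irr lphi).
  set chi' := 'Res[H] ('chi_i %% N)%CF.
  have Nchi' : chi' \is a character by rewrite cfRes_char ?cfMod_char ?irr_char.
  have : k \in irr_constt chi'.
    by rewrite irr_consttE -Dk cfdotC conjC_eq0 Frobenius_reciprocity.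
  move/(cfker_constt Nchi'); rewrite -Dk; apply: subset_trans.
  rewrite cfker_Res ?cfMod_char ?irr_char // setIC setIS // cfker_mod //.
have nsNHH : N :&: H <| H by rewrite /normal subsetIr normsI ?normG.
have [f injf fim] := second_isom nNH.
have isoF : isom (H / (N :&: H)) (H / N) f by apply/isomP; split; rewrite ?fim.
pose psi := cfIsom isoF (phi / (N :&: H))%CF.
have lpsi : psi \is a linear_char by rewrite cfIsom_lin_char cfQuo_lin_char.
have modpsi : (psi %% N)%CF = phi.
  apply/cfun_inP => x Hx.
  rewrite cfMorphE ?(subsetP nNH) //.
  have Hx' : coset (N :&: H) x \in H / (N :&: H) by rewrite mem_quotient.
  have -> : coset_morphism N x = f (coset (N :&: H) x).
    have := fim [set x]; rewrite sub1set Hx => /(_ isT).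
    rewrite !quotient_set1 ?(subsetP nNH) ?(subsetP (normal_norm nsNHH)) //.
    rewrite morphim_set1 // => /set1_inj ->. done.
  by rewrite /psi cfIsomE // cfQuoE.
have key (k : Iirr (G / N)) :
    '['Ind[G / N] psi, 'chi_k] = '['Ind[G] phi, ('chi_k %% N)%CF].
  rewrite -!Frobenius_reciprocity (cfResMod _ sHG nsNG) -modpsi.
  by rewrite (@cfMorph_iso _ _ H _ (coset_morphism N) nNH).
exists (H / N)%G; split; first exact: quotientS.
exists psi; split=> //; rewrite !key; split=> //.
Qed.
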